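(* If an unbounded graph matroid family $\mathcal{M}$ has the Whitney property, then it has the Lovász-Yemini property.
   Context: All graphs are finite and simple and have no isolated vertices. A graph matroid family $\mathcal{M}$ assigns to every graph $G$ a matroid $\mathcal{M}(G)$ on $E(G)$ such that (i) every graph isomorphism $V(G)\to V(H)$ induces an isomorphism $\mathcal{M}(G)\to\mathcal{M}(H)$, and (ii) for every subgraph $H$ of $G$, $\mathcal{M}(H)$ is the restriction of $\mathcal{M}(G)$ to $E(H)$. $r(G)$ is the rank of $\mathcal{M}(G)$; $\mathcal{M}$ is unbounded if $r(K_n)$ is unbounded; $G$ is $\mathcal{M}$-rigid if $r(G)=r(K_{V(G)})$. $G$ is $\mathcal{M}$-reconstructible if every matroid isomorphism $\psi:E(G)\to E(H)$ between $\mathcal{M}(G)$ and $\mathcal{M}(H)$, for any graph $H$, is induced by a graph isomorphism $\varphi$ (i.e. $\psi(uv)=\varphi(u)\varphi(v)$). $\mathcal{M}$ has the Whitney property if for some nonnegative integer $c$ every $c$-connected graph is $\mathcal{M}$-reconstructible, and the Lovász-Yemini property if for some nonnegative integer $c$ every $c$-connected graph is $\mathcal{M}$-rigid. *)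

(* Defs.v *)
From mathcomp Require Import all_boot.
From mathcomp Require Import finmap.
Set Implicit Arguments.
Unset Strict Implicit.
Unset Printing Implicit Defensive.
Local Open Scope fset_scope.

(* An (undirected) edge uv is stored in normal form (min u v, max u v). *)
Definition edge := (nat * nat)%type.
Definition mkedge (u v : nat) : edge := (minn u v, maxn u v).

(* A finite simple graph without isolated vertices, with vertices in nat,
   is given by its edge set; well-formedness: every edge (u,v) has u < v
   (no loops, normalized). *)
Definition graph := {fset edge}.
Definition wf_graph (G : graph) : Prop := forall e, e \in G -> e.1 < e.2.
Definition verts (G : graph) : {fset nat} :=
  [fset e.1 | e in G] `|` [fset e.2 | e in G].

Definition complete_on (V : {fset nat}) : graph :=
  [fset e | e in [fset mkedge u v | u in V, v in V] & e.1 < e.2].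
Definition K_ (n : nat) : graph := complete_on [fset i | i in iota 0 n].

Definition emap (phi : nat -> nat) (e : edge) : edge := mkedge (phi e.1) (phi e.2).

Definition graph_iso (G H : graph) (phi : nat -> nat) : Prop :=
  {in verts G &, injective phi} /\ [fset emap phi e | e in G] = H.

Definition is_matroid (E : {fset edge}) (I : {fset edge} -> bool) : Prop :=
  [/\ I fset0,
      forall F, I F -> F `<=` E,
      forall F F', I F -> F' `<=` F -> I F' &
      forall F1 F2, I F1 -> I F2 -> #|` F1 | < #|` F2 | ->
        exists2 e, e \in F2 `\` F1 & I (e |` F1)].

Definition graph_matroid_family (M : graph -> {fset edge} -> bool) : Prop :=
  [/\ forall G, wf_graph G -> is_matroid G (M G),
      forall G H phi, wf_graph G -> wf_graph H -> graph_iso G H phi ->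
        forall F, F `<=` G -> M G F = M H [fset emap phi e | e in F] &
      forall G H, wf_graph G -> wf_graph H -> H `<=` G ->
        forall F, M H F = M G F && (F `<=` H)].

Definition rk (M : graph -> {fset edge} -> bool) (G : graph) : nat :=
  \max_(F <- fpowerset G | M G F) #|` F |.

Definition unbounded (M : graph -> {fset edge} -> bool) : Prop :=
  forall k, exists n, k <= rk M (K_ n).

Definition rigid (M : graph -> {fset edge} -> bool) (G : graph) : Prop :=
  rk M G = rk M (complete_on (verts G)).

Definition matroid_iso (M : graph -> {fset edge} -> bool) (G H : graph)
    (psi : edge -> edge) : Prop :=
  [/\ {in G &, injective psi}, [fset psi e | e in G] = H &
      forall F, F `<=` G -> M G F = M H [fset psi e | e in F]].

Definition reconstructible (M : graph -> {fset edge} -> bool) (G : graph) : Prop :=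
  forall H psi, wf_graph H -> matroid_iso M G H psi ->
    exists phi, graph_iso G H phi /\ {in G, forall e, psi e = emap phi e}.

Definition adj_minus (G : graph) (X : {fset nat}) : rel nat :=
  fun x y => [&& mkedge x y \in G, x \notin X & y \notin X].
Definition connected_minus (G : graph) (X : {fset nat}) : Prop :=
  forall u v, u \in verts G `\` X -> v \in verts G `\` X ->
    exists p : seq nat, path (adj_minus G X) u p /\ last u p = v.

(* c-connected (Diestel): more than c vertices, and G - X connected for
   every set X of fewer than c vertices. *)
Definition c_connected (c : nat) (G : graph) : Prop :=
  c < #|` verts G | /\
  forall X : {fset nat}, X `<=` verts G -> #|` X | < c -> connected_minus G X.

Definition whitney_property (M : graph -> {fset edge} -> bool) : Prop :=
  exists c, forall G, wf_graph G -> c_connected c G -> reconstructible M G.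

Definition lovasz_yemini_property (M : graph -> {fset edge} -> bool) : Prop :=
  exists c, forall G, wf_graph G -> c_connected c G -> rigid M G.

(* Main.v *)
Require Import Defs.
From mathcomp Require Import all_boot.
From mathcomp Require Import finmap.
From Stdlib Require Import Classical.
Set Implicit Arguments.
Unset Strict Implicit.
Unset Printing Implicit Defensive.
Local Open Scope fset_scope.


Lemma mkedgeC u v : mkedge u v = mkedge v u.
Proof. by rewrite /mkedge minnC maxnC. Qed.

Lemma mkedge_eq p q r s : mkedge p q = mkedge r s -> (p = r /\ q = s) \/ (p = s /\ q = r).
Proof.
rewrite /mkedge => -[h1 h2].
case: (leqP p q) => hpq; case: (leqP r s) => hrs; move: h1 h2.
- rewrite (minn_idPl hpq) (maxn_idPr hpq) (minn_idPl hrs) (maxn_idPr hrs); by left.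
- rewrite (minn_idPl hpq) (maxn_idPr hpq) (minn_idPr (ltnW hrs)) (maxn_idPl (ltnW hrs)); by right.
- rewrite (minn_idPr (ltnW hpq)) (maxn_idPl (ltnW hpq)) (minn_idPl hrs) (maxn_idPr hrs); by right.
- rewrite (minn_idPr (ltnW hpq)) (maxn_idPl (ltnW hpq)) (minn_idPr (ltnW hrs)) (maxn_idPl (ltnW hrs)); by left.
Qed.

Lemma mkedge_norm (e : edge) : e.1 < e.2 -> mkedge e.1 e.2 = e.
Proof. case: e => a b /= h; rewrite /mkedge (minn_idPl (ltnW h)) (maxn_idPr (ltnW h)) //. Qed.

Lemma emap_mkedge phi p q : emap phi (mkedge p q) = mkedge (phi p) (phi q).
Proof.
rewrite /emap; case: (leqP p q) => h.
  by rewrite /mkedge (minn_idPl h) (maxn_idPr h).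
by rewrite [mkedge p q]/mkedge (minn_idPr (ltnW h)) (maxn_idPl (ltnW h)) mkedgeC.
Qed.

Lemma in_verts (G : graph) x : x \in verts G <-> exists2 g, g \in G & (x = g.1 \/ x = g.2).
Proof.
rewrite /verts in_fsetU; split.
  by case/orP => /imfsetP [g /= hg ->]; exists g => //; [left|right].
by case=> g hg [->|->]; apply/orP; [left|right]; apply/imfsetP; exists g.
Qed.

Lemma in_complete (V : {fset nat}) (g : edge) :
  g \in complete_on V = [&& g.1 \in V, g.2 \in V & g.1 < g.2].
Proof.
rewrite /complete_on; apply/idP/idP.
  rewrite in_fset /= => /andP [] /imfset2P [u hu [v hv ->]] /= h.
  rewrite h andbT.
  by case: (leqP u v) => huv; rewrite ?(minn_idPl huv) ?(maxn_idPr huv)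
     ?(minn_idPr (ltnW huv)) ?(maxn_idPl (ltnW huv)) ?hu ?hv.
case/and3P => h1 h2 h3; rewrite in_fset /=.
apply/andP; split=> //; apply/imfset2P; exists g.1 => //; exists g.2 => //; by rewrite mkedge_norm.
Qed.



Section Mat.
Variable M : graph -> {fset edge} -> bool.
Hypothesis HM : graph_matroid_family M.

Lemma rk_ge G F : F `<=` G -> M G F -> #|` F| <= rk M G.
Proof. move=> hF hM; rewrite /rk; apply: (leq_bigmax_seq F) => //; by rewrite fpowersetE. Qed.

Lemma rk_le G k : (forall F, F `<=` G -> M G F -> #|` F| <= k) -> rk M G <= k.
Proof. move=> h; apply/bigmax_leqP_seq => F; rewrite fpowersetE; exact: h. Qed.

Lemma restr G H F : wf_graph G -> wf_graph H -> H `<=` G -> M H F = M G F && (F `<=` H).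
Proof. move=> wG wH s; case: HM => _ _ h3; exact: (h3 G H wG wH s F). Qed.

Lemma rk_mono G H : wf_graph G -> wf_graph H -> H `<=` G -> rk M H <= rk M G.
Proof.
move=> wG wH sHG; apply: rk_le => F sF hF; apply: rk_ge.
  exact: fsubset_trans sF sHG.
by move: hF; rewrite (restr F wG wH sHG) => /andP[].
Qed.

Lemma augment A F0 C : wf_graph A -> M A F0 -> M A C ->
  exists J, [/\ M A J, F0 `<=` J & #|` C| <= #|` J|].
Proof.
move=> wA h0 hC; case: HM => /(_ A wA) [_ _ _ aug] _ _.
have key : forall n F1, #|` C| - #|` F1| <= n -> M A F1 ->
  exists J, [/\ M A J, F1 `<=` J & #|` C| <= #|` J|].
  elim => [|n IH] F1 hn h1.
    by exists F1; split => //; rewrite -subn_eq0 -leqn0.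
  case: (leqP #|` C| #|` F1|) => hlt; first by exists F1.
  have [x hx hxF] := aug _ _ h1 hC hlt.
  move: hx; rewrite in_fsetD => /andP [hxn _].
  have hb : #|` C| - #|` (x |` F1)| <= n.
    move: hn; rewrite cardfsU1 hxn add1n subnS; case: (#|` C| - #|` F1|) => //.
  have [J [j1 j2 j3]] := IH (x |` F1) hb hxF.
  exists J; split => //; apply: fsubset_trans j2; exact: fsubsetU1.
exact: (key _ F0 (leqnn _) h0).
Qed.

Lemma coloop A H e : wf_graph A -> wf_graph H -> A = e |` H -> e \notin H ->
  rk M H < rk M A -> forall F0, F0 `<=` H -> M A F0 -> M A (e |` F0).
Proof.
move=> wA wH hA heH hrk F0 sF0 hF0.
have [C [sC hC hCs]] : exists C, [/\ C `<=` A, M A C & rk M H < #|` C|].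
  apply: NNPP => hn; move: hrk; rewrite ltnNge => /negP; apply.
  apply: rk_le => C sC hC; rewrite leqNgt; apply/negP => hc; apply: hn; by exists C.
have [J [hJ sJ hCJ]] := augment wA hF0 hC.
case: HM => /(_ A wA) [_ sub her _] _ _.
have eJ : e \in J.
  apply: NNPP => /negP heJ.
  have sJH : J `<=` H.
    apply/fsubsetP => x hx; have := fsubsetP (sub _ hJ) x hx; rewrite hA in_fset1U.
    case/orP => // /eqP hxe; move: heJ; by rewrite -hxe hx.
  have sHA : H `<=` A by rewrite hA fsubsetU1.
  have : M H J by rewrite (restr J wA wH sHA) hJ sJH.
  move/(rk_ge sJH) => hJH; move: (leq_trans hCJ hJH); by rewrite leqNgt hCs.
apply: (her J) => //; apply/fsubsetP => x; rewrite in_fset1U; case/orP => [/eqP -> //|].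
exact: (fsubsetP sJ).
Qed.
End Mat.



Lemma wf_complete V : wf_graph (complete_on V).
Proof. by move=> g; rewrite in_complete => /and3P[]. Qed.

Lemma wf_sub A B : A `<=` B -> wf_graph B -> wf_graph A.
Proof. move=> s w g hg; apply: w; exact: (fsubsetP s). Qed.

Lemma sub_complete G : wf_graph G -> G `<=` complete_on (verts G).
Proof.
move=> w; apply/fsubsetP => g hg; rewrite in_complete (w g hg) andbT.
by apply/andP; split; apply/in_verts; exists g => //; [left|right].
Qed.

Lemma verts_sub G A x : G `<=` A -> x \in verts G -> x \in verts A.
Proof. move=> s /in_verts [g hg h]; apply/in_verts; exists g => //; exact: (fsubsetP s). Qed.

Lemma verts_complete V x : x \in verts (complete_on V) -> x \in V.
Proof. by case/in_verts => g; rewrite in_complete => /and3P[h1 h2 _] [->|->]. Qed.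

Lemma verts_between G A : wf_graph G -> G `<=` A -> A `<=` complete_on (verts G) ->
  verts A = verts G.
Proof.
move=> w s1 s2; apply/fsetP => x; apply/idP/idP; last exact: verts_sub.
by move/(verts_sub s2)/verts_complete.
Qed.

Lemma cconn_mono c c' G : c <= c' -> c_connected c' G -> c_connected c G.
Proof.
move=> hc [h1 h2]; split; first exact: leq_ltn_trans h1.
move=> X sX hX; apply: h2 => //; exact: leq_trans hX hc.
Qed.

Lemma cconn_super c G A : G `<=` A -> verts A = verts G -> c_connected c G -> c_connected c A.
Proof.
move=> s hv [h1 h2]; split; first by rewrite hv.
move=> X; rewrite hv => sX hX u v hu hv'.
rewrite hv in hu hv'.
have [p [hp hl]] := h2 X sX hX u v hu hv'.
exists p; split => //; apply: sub_path hp => x y /and3P [a b c'].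
by rewrite /adj_minus (fsubsetP s _ a) b c'.
Qed.

Lemma mkedge_verts G a y : mkedge a y \in G -> a \in verts G /\ y \in verts G.
Proof.
move=> h; split; apply/in_verts; exists (mkedge a y) => //; rewrite /mkedge /=;
 case: (leqP a y) => hh;
 rewrite ?(minn_idPl hh) ?(maxn_idPr hh) ?(minn_idPr (ltnW hh)) ?(maxn_idPl (ltnW hh)); auto.
Qed.

Lemma deg k G a (S : {fset nat}) : wf_graph G -> c_connected k G -> a \in verts G ->
  #|` S| < k -> exists y, y \notin S /\ mkedge a y \in G.
Proof.
move=> w [hk hc] ha hS.
pose X := (S `&` verts G) `\ a.
have sX : X `<=` verts G by apply/fsubsetP => x; rewrite in_fsetD1 in_fsetI => /and3P [].
have cX : #|` X| <= #|` S|.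
  apply: leq_trans (fsubset_leq_card (fsubsetIl S (verts G))).
  apply: fsubset_leq_card; exact: fsubsetDl.
have [v hv] : exists v, v \in verts G `\` (a |` X).
  apply/fset0Pn; rewrite -cardfs_gt0 cardfsD.
  have : #|` verts G `&` (a |` X)| <= #|` X|.+1.
    by apply: leq_trans (fsubset_leq_card (fsubsetIr _ _)) _; rewrite cardfsU1; case: (a \notin X).
  move=> h; rewrite subn_gt0; apply: leq_ltn_trans h _; apply: leq_ltn_trans hk; exact: leq_ltn_trans cX hS.
move: hv; rewrite in_fsetD in_fset1U negb_or => /andP [/andP [hva hvX] hvG].
have aX : a \notin X by rewrite in_fsetD1 eqxx.
have ha' : a \in verts G `\` X by rewrite in_fsetD aX ha.
have hv' : v \in verts G `\` X by rewrite in_fsetD hvX hvG.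
have [p [hp hl]] := hc X sX (leq_ltn_trans cX hS) a v ha' hv'.
case: p hp hl => [|y p] /=; first by move=> _ hav; move: hva; rewrite hav eqxx.
move=> /andP [/and3P [hay _ hyX] _] _.
exists y; split => //; apply/negP => hyS.
move: hyX; rewrite in_fsetD1 in_fsetI hyS (mkedge_verts hay).2 /= !andbT negbK => /eqP hya.
move: (w _ hay); rewrite hya /mkedge minnn maxnn ltnn //.
Qed.

Lemma cardU1_le (x : nat) (S : {fset nat}) : #|` x |` S| <= #|` S|.+1.
Proof. by rewrite cardfsU1; case: (x \notin S). Qed.

Lemma mkedge_end a y (e : edge) : mkedge a y = e -> y = e.1 \/ y = e.2.
Proof.
move=> <-; rewrite /mkedge; case: (leqP a y) => h; [by right | by left].
Qed.

Lemma deg2 G a (e f : edge) : wf_graph G -> c_connected 6 G -> a \in verts G ->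
  exists y1 y2, [/\ y1 != y2, mkedge a y1 \in G, mkedge a y2 \in G,
     (mkedge a y1 != e) && (mkedge a y1 != f) & (mkedge a y2 != e) && (mkedge a y2 != f)].
Proof.
move=> w c ha.
pose S1 : {fset nat} := e.1 |` (e.2 |` (f.1 |` [fset f.2])).
have c1 : #|` S1| <= 4.
  rewrite /S1; do 3 (apply: (leq_trans (cardU1_le _ _)); rewrite ltnS).
  by rewrite cardfs1.
have hS1 : forall y, y \notin S1 -> (mkedge a y != e) && (mkedge a y != f).
  move=> y hy; apply/andP; split; apply/eqP => /mkedge_end [] hh; move: hy;
  by rewrite /S1 !in_fset1U in_fset1 hh eqxx ?orbT.
have [y1 [hy1 hay1]] := deg (S:=S1) w c ha (leq_ltn_trans c1 (isT : 4 < 6)).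
have c2 : #|` y1 |` S1| < 6.
  apply: leq_ltn_trans (cardU1_le _ _) _; rewrite ltnS; exact: leq_ltn_trans c1 _.
have [y2 [hy2 hay2]] := deg (S:=y1 |` S1) w c ha c2.
move: hy2; rewrite in_fset1U negb_or => /andP [hy21 hy2].
exists y1, y2; split => //; last by apply: hS1.
  by rewrite eq_sym.
by apply: hS1.
Qed.



Lemma core M cW (HW : forall G, wf_graph G -> c_connected cW G -> reconstructible M G)
  (A B : graph) psi (e f : edge) (V : {fset nat}) :
  wf_graph A -> wf_graph B -> c_connected cW A -> matroid_iso M A B psi ->
  e \in A -> psi e = f -> e != f -> e.1 < e.2 -> e.1 \in V -> e.2 \in V ->
  (forall g, g \in A -> g != e -> g != f -> psi g = g) ->
  (forall a, a \in V -> exists y1 y2, [/\ y1 != y2, mkedge a y1 \in A, mkedge a y2 \in A,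
     (mkedge a y1 != e) && (mkedge a y1 != f) & (mkedge a y2 != e) && (mkedge a y2 != f)]) ->
  False.
Proof.
move=> wA wB cA iso eA pe nef e12 e1V e2V hfix hdeg.
have [phi [_ hphi]] := HW A wA cA B psi wB iso.
have fixv : forall a, a \in V -> phi a = a.
  move=> a aV; have [y1 [y2 [ny h1 h2 /andP [n1 n1'] /andP [n2 n2']]]] := hdeg a aV.
  have := hphi _ h1; rewrite hfix // emap_mkedge => /esym /mkedge_eq.
  have := hphi _ h2; rewrite hfix // emap_mkedge => /esym /mkedge_eq.
  case=> [[-> _] //|[hy2 _]] [[-> _] //|[hy1 _]].
  by move: ny; rewrite -hy1 -hy2 eqxx.
move: (hphi _ eA); rewrite pe /emap (fixv _ e1V) (fixv _ e2V) mkedge_norm // => hfe.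
by move: nef; rewrite hfe eqxx.
Qed.



Definition swap (e f g : edge) : edge := if g == e then f else if g == f then e else g.

Lemma swapK e f : e != f -> forall g, swap e f (swap e f g) = g.
Proof.
move=> nef g; rewrite /swap; case: (eqVneq g e) => [->|nge].
  by rewrite eq_sym (negbTE nef) eqxx.
case: (eqVneq g f) => [->|ngf]; first by rewrite eqxx.
by rewrite (negbTE nge) (negbTE ngf).
Qed.

Lemma swap_inj e f : e != f -> injective (swap e f).
Proof. move=> nef; exact: (can_inj (swapK nef)). Qed.

Lemma im_fix (F : {fset edge}) psi : (forall g, g \in F -> psi g = g) -> [fset psi g | g in F] = F.
Proof.
move=> h; apply/fsetP => x; apply/imfsetP/idP => [[g hg ->]|hx]; first by rewrite h.
by exists x => //; rewrite h.
Qed.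

Lemma im_one (F : {fset edge}) psi e f : e \in F -> psi e = f ->
  (forall g, g \in F -> g != e -> psi g = g) -> [fset psi g | g in F] = f |` (F `\ e).
Proof.
move=> eF pe h; apply/fsetP => x; rewrite in_fset1U in_fsetD1.
apply/imfsetP/idP => [[g hg ->]|].
  case: (eqVneq g e) => [->|nge]; first by rewrite pe eqxx.
  by rewrite h // nge hg orbT.
case/orP => [/eqP ->|/andP [nxe xF]]; first by exists e.
by exists x => //; rewrite h.
Qed.

Lemma im_two (F : {fset edge}) psi e f : e \in F -> f \in F -> psi e = f -> psi f = e ->
  (forall g, g \in F -> g != e -> g != f -> psi g = g) -> [fset psi g | g in F] = F.
Proof.
move=> eF fF pe pf h; apply/fsetP => x.
apply/imfsetP/idP => [[g hg ->]|xF].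
  case: (eqVneq g e) => [->|nge]; first by rewrite pe.
  case: (eqVneq g f) => [->|ngf]; first by rewrite pf.
  by rewrite h.
case: (eqVneq x e) => [->|nxe]; first by exists f.
case: (eqVneq x f) => [->|nxf]; first by exists e.
by exists x => //; rewrite h.
Qed.

Section Iso.
Variable M : graph -> {fset edge} -> bool.
Hypothesis HM : graph_matroid_family M.

Lemma her A F F' : wf_graph A -> M A F -> F' `<=` F -> M A F'.
Proof. move=> wA; case: HM => /(_ A wA) [_ _ h _] _ _; exact: h. Qed.

Lemma iso_case1 (H : graph) (e f : edge) :
  wf_graph (e |` H) -> wf_graph (f |` H) -> wf_graph H -> e \notin H -> f \notin H -> e != f ->
  (forall F0, F0 `<=` H -> M (e |` H) F0 -> M (e |` H) (e |` F0)) ->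
  (forall F0, F0 `<=` H -> M (f |` H) F0 -> M (f |` H) (f |` F0)) ->
  matroid_iso M (e |` H) (f |` H) (swap e f).
Proof.
move=> wA wB wH eH fH nef cA cB.
have fixH : forall g, g \in H -> swap e f g = g.
  move=> g gH; rewrite /swap; case: (eqVneq g e) => [ge|_]; first by move: eH; rewrite -ge gH.
  case: (eqVneq g f) => [gf|_] //; by move: fH; rewrite -gf gH.
have pe : swap e f e = f by rewrite /swap eqxx.
have rA : forall F0, F0 `<=` H -> M (e |` H) F0 = M H F0.
  by move=> F0 s; rewrite (restr HM F0 wA wH (fsubsetU1 _ _)) s andbT.
have rB : forall F0, F0 `<=` H -> M (f |` H) F0 = M H F0.
  by move=> F0 s; rewrite (restr HM F0 wB wH (fsubsetU1 _ _)) s andbT.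
split.
- move=> x y _ _; exact: swap_inj.
- rewrite (im_one (fset1U1 _ _) pe); first by rewrite fsetU1K.
  move=> g; rewrite in_fset1U => /orP [/eqP -> /eqP //|gH _]; exact: fixH.
- move=> F sF.
  have sF0 : F `\ e `<=` H.
    apply/fsubsetP => x; rewrite in_fsetD1 => /andP [nxe xF].
    by move: (fsubsetP sF x xF); rewrite in_fset1U (negbTE nxe).
  case: (boolP (e \in F)) => eF.
  + rewrite (im_one eF pe); last first.
      move=> g gF nge; apply: fixH; apply: (fsubsetP sF0); by rewrite in_fsetD1 nge.
    rewrite -{1}(fsetD1K eF).
    have -> : M (e |` H) (e |` (F `\ e)) = M (e |` H) (F `\ e).
      apply/idP/idP => [h|h]; last exact: cA.
      apply: (her wA h); exact: fsubsetU1.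
    have -> : M (f |` H) (f |` (F `\ e)) = M (f |` H) (F `\ e).
      apply/idP/idP => [h|h]; last exact: cB.
      apply: (her wB h); exact: fsubsetU1.
    by rewrite rA // rB.
  + have sFH : F `<=` H.
      apply/fsubsetP => x xF; move: (fsubsetP sF x xF); rewrite in_fset1U.
      case/orP => // /eqP hx; by move: eF; rewrite -hx xF.
    rewrite im_fix; last by move=> g gF; apply: fixH; exact: (fsubsetP sFH).
    by rewrite rA // rB.
Qed.

Lemma iso_case2 (K : graph) (e f : edge) :
  wf_graph K -> e \in K -> f \in K -> e != f ->
  (forall F0, F0 `<=` K -> e \notin F0 -> M K F0 -> M K (e |` F0)) ->
  (forall F0, F0 `<=` K -> f \notin F0 -> M K F0 -> M K (f |` F0)) ->
  matroid_iso M K K (swap e f).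
Proof.
move=> wK eK fK nef cE cF.
have pe : swap e f e = f by rewrite /swap eqxx.
have pf : swap e f f = e by rewrite /swap eq_sym (negbTE nef) eqxx.
have pg : forall g, g != e -> g != f -> swap e f g = g.
  by move=> g h1 h2; rewrite /swap (negbTE h1) (negbTE h2).
(* one direction suffices *)
have one : forall F, F `<=` K -> M K F -> M K [fset swap e f g | g in F].
  move=> F sF hF.
  case: (boolP (e \in F)) => eF; case: (boolP (f \in F)) => fF.
  - by rewrite (im_two eF fF pe pf) // => g _; apply: pg.
  - rewrite (im_one eF pe); last by move=> g gF nge; apply: pg => //; apply/eqP => h; move: fF; rewrite -h gF.
    apply: cF.
    + apply: fsubset_trans sF; exact: fsubsetDl.
    + by rewrite in_fsetD1 (negbTE fF) andbF.
    + apply: (her wK hF); exact: fsubsetDl.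
  - have fe : swap e f f = e := pf.
    rewrite (im_one fF fe); last by move=> g gF ngf; apply: pg => //; apply/eqP => h; move: eF; rewrite -h gF.
    apply: cE.
    + apply: fsubset_trans sF; exact: fsubsetDl.
    + by rewrite in_fsetD1 (negbTE eF) andbF.
    + apply: (her wK hF); exact: fsubsetDl.
  - by rewrite im_fix // => g gF; apply: pg; apply/eqP => h; [move: eF|move: fF]; rewrite -h gF.
have imK : forall F, F `<=` K -> [fset swap e f g | g in F] `<=` K.
  move=> F sF; apply/fsubsetP => x /imfsetP [g gF ->].
  case: (eqVneq g e) => [->|nge]; first by rewrite pe.
  case: (eqVneq g f) => [->|ngf]; first by rewrite pf.
  by rewrite pg //; exact: (fsubsetP sF).
have invF : forall F, [fset swap e f g | g in [fset swap e f g | g in F]] = F.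
  move=> F; apply/fsetP => x; apply/imfsetP/idP => [[y /imfsetP [g gF ->] ->]|xF].
    by rewrite swapK.
  exists (swap e f x); first by apply/imfsetP; exists x.
  by rewrite swapK.
split.
- move=> x y _ _; exact: swap_inj.
- by rewrite (im_two eK fK pe pf) // => g _; apply: pg.
- move=> F sF; apply/idP/idP; first exact: one.
  move=> h; rewrite -(invF F); apply: one => //; exact: imK.
Qed.
End Iso.



Definition tr (b w x : nat) := if x == b then w else if x == w then b else x.

Lemma trK b w x : tr b w (tr b w x) = x.
Proof.
rewrite /tr; case: (eqVneq x b) => [->|nxb].
  case: (eqVneq w b) => [->|nwb] //; by rewrite eqxx.
case: (eqVneq x w) => [->|nxw]; first by rewrite eqxx.
by rewrite (negbTE nxb) (negbTE nxw).
Qed.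

Lemma tr_in (V : {fset nat}) b w x : b \in V -> w \in V -> x \in V -> tr b w x \in V.
Proof. by rewrite /tr => hb hw hx; case: ifP => _ //; case: ifP. Qed.

Lemma emap_trK b w g : g.1 < g.2 -> emap (tr b w) (emap (tr b w) g) = g.
Proof. move=> h; by rewrite {2}/emap emap_mkedge !trK mkedge_norm. Qed.

Lemma sym_coloop M (HM : graph_matroid_family M) (V : {fset nat}) a b w :
  a \in V -> b \in V -> w \in V -> a < b -> w != a -> w != b ->
  (forall F0, F0 `<=` complete_on V -> (a, b) \notin F0 -> M (complete_on V) F0 ->
     M (complete_on V) ((a, b) |` F0)) ->
  forall F0, F0 `<=` complete_on V -> mkedge a w \notin F0 -> M (complete_on V) F0 ->
     M (complete_on V) (mkedge a w |` F0).
Proof.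
move=> aV bV wV ab nwa nwb cE F0 sF0 fF0 hF0.
set KV := complete_on V.
set s := tr b w.
have wK : wf_graph KV := @wf_complete V.
have hK : forall g, g \in KV -> emap s g \in KV.
  move=> g; rewrite /KV !in_complete => /and3P [h1 h2 h3].
  rewrite /emap /mkedge /=.
  have n12 : s g.1 != s g.2.
    apply/eqP => h; have := congr1 (tr b w) h; rewrite !trK => h'; by move: h3; rewrite h' ltnn.
  have i1 : s g.1 \in V by apply: tr_in.
  have i2 : s g.2 \in V by apply: tr_in.
  case: (ltngtP (s g.1) (s g.2)) n12 => hh //= _; first by rewrite i1 i2.
  by rewrite i1 i2.
have gi : graph_iso KV KV s.
  split; first by move=> x y _ _; apply: (can_inj (@trK b w)).
  apply/fsetP => x; apply/imfsetP/idP => [[g gK ->]|xK]; first exact: hK.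
  exists (emap s x); first exact: hK.
  by rewrite emap_trK //; apply: wK.
have iso : forall F, F `<=` KV -> M KV F = M KV [fset emap s g | g in F].
  by move=> F sF; case: HM => _ hiso _; apply: hiso.
have sa : s a = a by rewrite /s /tr (ltn_eqF ab) eq_sym (negbTE nwa).
have sb : s b = w by rewrite /s /tr eqxx.
have sw : s w = b by rewrite /s /tr (negbTE nwb) eqxx.
have se : emap s (a, b) = mkedge a w by rewrite /emap /= sa sb.
have sf : emap s (mkedge a w) = (a, b) by rewrite emap_mkedge sa sw; exact: (@mkedge_norm (a, b) ab).
have eK : (a, b) \in KV by rewrite /KV in_complete /= aV bV ab.
have fK : mkedge a w \in KV by rewrite -se; apply: hK.
set F1 := [fset emap s g | g in F0].
have sF1 : F1 `<=` KV by apply/fsubsetP => x /imfsetP [g gF ->]; apply: hK; exact: (fsubsetP sF0).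
have eF1 : (a, b) \notin F1.
  apply/negP => /imfsetP [g gF hg].
  have : emap s (a, b) = g by rewrite hg emap_trK //; apply: wK; exact: (fsubsetP sF0).
  by rewrite se => hfg; move: fF0; rewrite hfg gF.
have hF1 : M KV F1 by rewrite -iso.
have := cE F1 sF1 eF1 hF1.
rewrite iso; last by apply/fsubsetP => x; rewrite in_fset1U => /orP [/eqP -> //|]; apply: (fsubsetP sF0).
by rewrite imfsetU1 sf.
Qed.



Lemma mkedge_in_complete (V : {fset nat}) u v : u \in V -> v \in V -> u != v ->
  mkedge u v \in complete_on V.
Proof.
move=> hu hv nuv; rewrite in_complete /mkedge; case: (ltngtP u v) => h /=.
- by rewrite hu hv h.
- by rewrite hu hv h.
- by move: nuv; rewrite h eqxx.
Qed.

Lemma card_lt (K H : {fset edge}) f : f \in K -> f \notin H ->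
  #|` K `\` (f |` H)| < #|` K `\` H|.
Proof.
move=> fK fH.
have -> : K `\` (f |` H) = (K `\` H) `\ f.
  apply/fsetP => x; rewrite !in_fsetD !in_fset1U ?in_fset1 negb_or.
  by case: (x == f); case: (x \in H); case: (x \in K).
by rewrite [X in _ < X](cardfsD1 f) in_fsetD fH fK.
Qed.

Unset Implicit Arguments.

Theorem lemma3p2 (M : graph -> {fset edge} -> bool) :
  graph_matroid_family M -> unbounded M -> whitney_property M ->
  lovasz_yemini_property M.
Proof.
move=> HM _ [cW HW]; exists (cW + 6)%N => G wG cG.
rewrite /rigid; apply: NNPP => hnr.
set V := verts G; set KV := complete_on V.
have wKV : wf_graph KV := @wf_complete V.
have sGK : G `<=` KV := sub_complete wG.
have hGK : rk M G < rk M KV by rewrite ltn_neqAle; apply/andP; split; [apply/eqP|exact: rk_mono].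
have c6 : c_connected 6 G by apply: cconn_mono cG; exact: leq_addl.
have cWG : c_connected cW G by apply: cconn_mono cG; exact: leq_addr.
have [H [sGH sHK hH hmax]] : exists H, [/\ G `<=` H, H `<=` KV, rk M H < rk M KV &
    forall f, f \in KV -> f \notin H -> rk M KV <= rk M (f |` H)].
  suff : forall n H, #|` KV `\` H| <= n -> G `<=` H -> H `<=` KV -> rk M H < rk M KV ->
    exists H, [/\ G `<=` H, H `<=` KV, rk M H < rk M KV &
    forall f, f \in KV -> f \notin H -> rk M KV <= rk M (f |` H)].
    by move=> /(_ _ G (leqnn _) (fsubset_refl _) sGK hGK).
  elim => [|n IH] H0 hn s1 s2 hr;
    case: (classic (exists f, [/\ f \in KV, f \notin H0 & rk M (f |` H0) < rk M KV])).
  - by case=> f [fK fH _]; move: (leq_trans (card_lt fK fH) hn).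
  - move=> hno; exists H0; split => // f fK fH; rewrite leqNgt; apply/negP => hlt; apply: hno; by exists f.
  - case=> f [fK fH hf]; apply: (IH (f |` H0)).
    + by rewrite -ltnS; exact: leq_trans (card_lt fK fH) hn.
    + exact: fsubset_trans s1 (fsubsetU1 _ _).
    + by apply/fsubsetP => x; rewrite in_fset1U => /orP [/eqP ->|]; [|apply: (fsubsetP s2)].
    + exact: hf.
  - move=> hno; exists H0; split => // f fK fH; rewrite leqNgt; apply/negP => hlt; apply: hno; by exists f.
have wH : wf_graph H := wf_sub sHK wKV.
have [e eK eH] : exists2 e, e \in KV & e \notin H.
  apply/fsubsetPn/negP => sKH; move: (rk_mono HM wH wKV sKH); by rewrite leqNgt hH.
have hrke : rk M H < rk M (e |` H) := leq_trans hH (hmax e eK eH).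
have := eK; rewrite in_complete => /and3P [e1V e2V e12].
have sub1 : forall x, x \in KV -> x |` H `<=` KV.
  by move=> x xK; apply/fsubsetP => y; rewrite in_fset1U => /orP [/eqP ->|]; [|apply: (fsubsetP sHK)].
have vA : forall A, G `<=` A -> A `<=` KV -> verts A = V.
  move=> A s1 s2; exact: verts_between wG s1 s2.
have cA : forall A, G `<=` A -> A `<=` KV -> c_connected cW A.
  move=> A s1 s2; apply: cconn_super s1 (vA A s1 s2) cWG.
case: (classic (exists f, [/\ f \in KV, f \notin H & f != e])).
- case=> f [fK fH nfe].
  have wA : wf_graph (e |` H) := wf_sub (sub1 e eK) wKV.
  have wB : wf_graph (f |` H) := wf_sub (sub1 f fK) wKV.
  have hrkf : rk M H < rk M (f |` H) := leq_trans hH (hmax f fK fH).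
  have cE := coloop HM wA wH erefl eH hrke.
  have cF := coloop HM wB wH erefl fH hrkf.
  have nef : e != f by rewrite eq_sym.
  have iso := iso_case1 HM wA wB wH eH fH nef cE cF.
  have sGA : G `<=` e |` H := fsubset_trans sGH (fsubsetU1 _ _).
  apply: (core HW wA wB (cA _ sGA (sub1 e eK)) iso (fset1U1 _ _) _ nef e12 e1V e2V).
  + by rewrite /swap eqxx.
  + by move=> g _ h1 h2; rewrite /swap (negbTE h1) (negbTE h2).
  + move=> a aV; have [y1 [y2 [ny h1 h2 n1 n2]]] := deg2 e f wG c6 aV.
    by exists y1, y2; split => //; apply: (fsubsetP sGA).
- move=> hno.
  have KeH : KV = e |` H.
    apply/fsetP => x; rewrite in_fset1U; apply/idP/idP => [xK|].
      case: (eqVneq x e) => //= nxe; apply: NNPP => /negP xH; apply: hno; by exists x.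
    by case/orP => [/eqP ->|]; [|apply: (fsubsetP sHK)].
  have cE0 := coloop HM wKV wH KeH eH (leq_trans hrke (eq_leq (congr1 (rk M) (esym KeH)))).
  have cE : forall F0, F0 `<=` KV -> e \notin F0 -> M KV F0 -> M KV (e |` F0).
    move=> F0 s0 eF0; apply: cE0; apply/fsubsetP => x xF.
    move: (fsubsetP s0 x xF); rewrite KeH in_fset1U => /orP [/eqP hx|//].
    by move: eF0; rewrite -hx xF.
  have [w wV wn] : exists2 w, w \in V & w \notin e.1 |` [fset e.2].
    apply/fsubsetPn/negP => sV; move: (fsubset_leq_card sV) (proj1 cG).
    move=> h1 h2; have := leq_trans (leq_trans h2 h1) (cardU1_le _ _).
    by rewrite cardfs1 addnC.
  move: wn; rewrite in_fset1U in_fset1 negb_or => /andP [nw1 nw2].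
  move: e eK eH hrke e1V e2V e12 KeH cE0 cE hno nw1 nw2 => [a b] /= eK eH hrke aV bV ab KeH _ cE _ nwa nwb.
  have cF := sym_coloop HM aV bV wV ab nwa nwb cE.
  set f := mkedge a w in cF.
  have fK : f \in KV by apply: mkedge_in_complete; rewrite // eq_sym.
  have nef : (a, b) != f.
    apply/eqP => /esym; rewrite /f -[(a, b)](@mkedge_norm (a, b) ab) /=.
    by case/mkedge_eq => [[_ h]|[h _]]; [move: nwb; rewrite h eqxx|move: ab; rewrite -h ltnn].
  have iso := iso_case2 HM wKV eK fK nef cE cF.
  apply: (core HW wKV wKV (cA _ sGK (fsubset_refl _)) iso eK _ nef ab aV bV).
  + by rewrite /swap eqxx.
  + by move=> g _ h1 h2; rewrite /swap (negbTE h1) (negbTE h2).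
  + move=> x xV; have [y1 [y2 [ny h1 h2 n1 n2]]] := deg2 (a, b) f wG c6 xV.
    by exists y1, y2; split => //; apply: (fsubsetP sGK).
Qed.
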